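(* Let $A$ and $B$ be categories with variances, let $(R_1,L_1)$ be a span on $A$ and $(R_2,L_2)$ a span on $B$, and let $F\colon A\times B\rightarrow C$ be a functor of variance with respect to the product variance on $A\times B$. Assume that for every object $y$ of $B$ the end $[\int_{L_1}F](y):=\int_{L_1}F^y$ exists, with universal wedge $\omega^y=(\omega^y_a\colon \int_{L_1}F^y\rightarrow F(L_1(a),y))_{a\in R_1}$. Then the object assignment $y\mapsto [\int_{L_1}F](y)$ extends uniquely to a functor of variance $\int_{L_1}F\colon B\rightarrow C$ such that for every object $a$ of $R_1$ and every morphism $g$ of $B$, $$F(id_{L_1(a)},g)\circ \omega^{g_s}_a = \omega^{g_t}_a\circ [\textstyle\int_{L_1}F](g)$$ as morphisms $[\int_{L_1}F](g_s)\rightarrow F(L_1(a),g_t)$.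
   Context: A variance on a category $A$ is a pair $(E,M)$ of subcategories containing all objects such that every morphism $f$ factors uniquely as $f=me$ and uniquely as $f=e'm'$ with $e,e'$ in $E$ (covariant morphisms) and $m,m'$ in $M$ (contravariant morphisms). For $f\colon x\rightarrow y$ write $f=f^mf^e$ with $f^e\colon x\rightarrow f_t$ in $E$, $f^m\colon f_t\rightarrow y$ in $M$, and $f=f_ef_m$ with $f_m\colon x\rightarrow f_s$ in $M$, $f_e\colon f_s\rightarrow y$ in $E$. A functor $F\colon A\rightarrow C$ of variance $(E,M)$ assigns objects to objects and to each morphism $f$ a morphism $F(f)\colon F(f_s)\rightarrow F(f_t)$, preserving identities and satisfying, for composable $x\xrightarrow{f}y\xrightarrow{g}z$, $F(gf)=F((g^ef^m)^e)F(f)F((g_mf_e)_m)=F((g^ef^m)^m)F(g)F((g_mf_e)_e)$. The product variance on $A\times B$: a morphism $(f,g)$ is covariant (resp. contravariant) iff $f$ and $g$ both are. For $F\colon A\times B\rightarrow C$ of variance and objects $y$ of $B$, $F^y\colon A\rightarrow C$ is the functor of variance $F^y(x)=F(x,y)$, $F^y(f)=F(f,id_y)$. A span on $A$ is a pair $(R,L)$ of a category $R$ and a functor $L\colon R\rightarrow A$. For a functor of variance $G\colon A\rightarrow C$, an $L$-wedge of $G$ is a pair $(c,\eta)$ with $c$ an object of $C$ and $\eta=(\eta_x\colon c\rightarrow G(Lx))_{x\in R}$ satisfying $G(L(f)^e)\eta_x=G(L(f)^m)\eta_y$ for every morphism $f\colon x\rightarrow y$ of $R$; a morphism $(c,\eta)\rightarrow(d,\theta)$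 of $L$-wedges is $h\colon c\rightarrow d$ with $\theta_x h=\eta_x$ for all $x$. The end $\int_L G$ is a terminal $L$-wedge, whose family is called the universal wedge. *)

(* Defs.v *)
(* Categories are presented in the one-sorted ("arrows-only")
   style: a type of objects, a single type of all morphisms with source and
   target maps, and a total composition whose laws are required only on
   composable pairs.  This avoids dependent-type transports, which the
   notion of "functor of variance" would otherwise require (F(f) has type
   F(f_s) -> F(f_t), where f_s, f_t are only propositionally determined). *)
From Stdlib Require Import ClassicalEpsilon.

Set Implicit Arguments.
Unset Strict Implicit.

Record Cat := {
  ob : Type;
  mor : Type;
  src : mor -> ob;
  tgt : mor -> ob;
  idm : ob -> mor;
  comp : mor -> mor -> mor;            (* comp g f = g o f *)
  src_idm : forall x, src (idm x) = x;
  tgt_idm : forall x, tgt (idm x) = x;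
  src_comp : forall f g, tgt f = src g -> src (comp g f) = src f;
  tgt_comp : forall f g, tgt f = src g -> tgt (comp g f) = tgt g;
  comp_idl : forall f, comp (idm (tgt f)) f = f;
  comp_idr : forall f, comp f (idm (src f)) = f;
  comp_assoc : forall f g h, tgt f = src g -> tgt g = src h ->
    comp h (comp g f) = comp (comp h g) f
}.

Arguments src {c} _.
Arguments tgt {c} _.
Arguments idm {c} _.
Arguments comp {c} _ _.

Record Functor (A B : Cat) := {
  fo : ob A -> ob B;
  fmor : mor A -> mor B;
  fmor_src : forall f, src (fmor f) = fo (src f);
  fmor_tgt : forall f, tgt (fmor f) = fo (tgt f);
  fmor_idm : forall x, fmor (idm x) = idm (fo x);
  fmor_comp : forall f g, tgt f = src g ->
    fmor (comp g f) = comp (fmor g) (fmor f)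
}.

Section Prod.
Variables A B : Cat.
Definition pcomp (g f : mor A * mor B) : mor A * mor B :=
  (comp (fst g) (fst f), comp (snd g) (snd f)).
Definition psrc (f : mor A * mor B) : ob A * ob B := (src (fst f), src (snd f)).
Definition ptgt (f : mor A * mor B) : ob A * ob B := (tgt (fst f), tgt (snd f)).
Definition pidm (x : ob A * ob B) : mor A * mor B := (idm (fst x), idm (snd x)).

Lemma pair_eq_inv (X Y : Type) (a a' : X) (b b' : Y) :
  (a, b) = (a', b') -> a = a' /\ b = b'.
Proof. intros H; inversion H; auto. Qed.

Definition prodCat : Cat.
Proof.
  refine {| ob := ob A * ob B; mor := mor A * mor B; src := psrc; tgt := ptgt;
            idm := pidm; comp := pcomp |}.
  - intros [x y]; unfold psrc, pidm; simpl; rewrite !src_idm; reflexivity.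
  - intros [x y]; unfold ptgt, pidm; simpl; rewrite !tgt_idm; reflexivity.
  - intros [f1 f2] [g1 g2] H; unfold ptgt, psrc in *; simpl in *.
    apply pair_eq_inv in H; destruct H as [H1 H2].
    rewrite (src_comp H1), (src_comp H2); reflexivity.
  - intros [f1 f2] [g1 g2] H; unfold ptgt, psrc in *; simpl in *.
    apply pair_eq_inv in H; destruct H as [H1 H2].
    rewrite (tgt_comp H1), (tgt_comp H2); reflexivity.
  - intros [f1 f2]; unfold pcomp, pidm, ptgt; simpl; rewrite !comp_idl; reflexivity.
  - intros [f1 f2]; unfold pcomp, pidm, psrc; simpl; rewrite !comp_idr; reflexivity.
  - intros [f1 f2] [g1 g2] [h1 h2] H H'; unfold pcomp, ptgt, psrc in *; simpl in *.
    apply pair_eq_inv in H; apply pair_eq_inv in H'.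
    destruct H as [H1 H2]; destruct H' as [H1' H2'].
    rewrite (comp_assoc H1 H1'), (comp_assoc H2 H2'); reflexivity.
Defined.
End Prod.

(* A variance (E, M) on A: two subcategories containing all objects
   (i.e. containing all identities and closed under composition) such that
   every morphism factors uniquely as f = m o e and uniquely as f = e' o m'
   with e, e' in E and m, m' in M. *)
Record Variance (A : Cat) := {
  covE : mor A -> Prop;
  contM : mor A -> Prop;
  covE_idm : forall x, covE (idm x);
  contM_idm : forall x, contM (idm x);
  covE_comp : forall f g, tgt f = src g -> covE f -> covE g -> covE (comp g f);
  contM_comp : forall f g, tgt f = src g -> contM f -> contM g -> contM (comp g f);
  fact_ME_ex : forall f : mor A, exists e m : mor A,
    covE e /\ contM m /\ tgt e = src m /\ f = comp m e;
  fact_ME_uniq : forall e m e' m' : mor A,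
    covE e -> contM m -> covE e' -> contM m' ->
    tgt e = src m -> tgt e' = src m' -> comp m e = comp m' e' ->
    e = e' /\ m = m';
  fact_EM_ex : forall f : mor A, exists m e : mor A,
    contM m /\ covE e /\ tgt m = src e /\ f = comp e m;
  fact_EM_uniq : forall m e m' e' : mor A,
    contM m -> covE e -> contM m' -> covE e' ->
    tgt m = src e -> tgt m' = src e' -> comp e m = comp e' m' ->
    m = m' /\ e = e'
}.

Section Factorizations.
Variables (A : Cat) (V : Variance A).

Definition fact_up (f : mor A) : mor A * mor A :=
  let s := constructive_indefinite_description _ (fact_ME_ex V f) in
  let t := constructive_indefinite_description _ (proj2_sig s) in
  (proj1_sig s, proj1_sig t).
Definition fact_lo (f : mor A) : mor A * mor A :=
  let s := constructive_indefinite_description _ (fact_EM_ex V f) in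
  let t := constructive_indefinite_description _ (proj2_sig s) in
  (proj1_sig s, proj1_sig t).

Definition upE (f : mor A) := fst (fact_up f).
Definition upM (f : mor A) := snd (fact_up f).
Definition loM (f : mor A) := fst (fact_lo f).
Definition loE (f : mor A) := snd (fact_lo f).
Definition fT (f : mor A) : ob A := tgt (upE f).
Definition fS (f : mor A) : ob A := tgt (loM f).
End Factorizations.

Record VFunctor (A C : Cat) (V : Variance A) := {
  vo : ob A -> ob C;
  vmor : mor A -> mor C;
  vmor_src : forall f, src (vmor f) = vo (fS V f);
  vmor_tgt : forall f, tgt (vmor f) = vo (fT V f);
  vmor_idm : forall x, vmor (idm x) = idm (vo x);
  vmor_comp1 : forall f g : mor A, tgt f = src g ->
    vmor (comp g f) =
      comp (vmor (upE V (comp (upE V g) (upM V f))))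
           (comp (vmor f) (vmor (loM V (comp (loM V g) (loE V f)))));
  vmor_comp2 : forall f g : mor A, tgt f = src g ->
    vmor (comp g f) =
      comp (vmor (upM V (comp (upE V g) (upM V f))))
           (comp (vmor g) (vmor (loE V (comp (loM V g) (loE V f)))))
}.

Definition is_product_variance (A B : Cat) (VA : Variance A) (VB : Variance B)
  (VAB : Variance (prodCat A B)) : Prop :=
  (forall p : mor (prodCat A B), covE VAB p <-> covE VA (fst p) /\ covE VB (snd p)) /\
  (forall p : mor (prodCat A B), contM VAB p <-> contM VA (fst p) /\ contM VB (snd p)).

(* Only the object and morphism assignments of the
   functor of variance G : A -> C enter the definition, so it is stated for
   an object map Go and a morphism map Gm (e.g. those of F^y). *)
Definition is_wedge (A C R : Cat) (V : Variance A) (L : Functor R A)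
  (Go : ob A -> ob C) (Gm : mor A -> mor C)
  (c : ob C) (eta : ob R -> mor C) : Prop :=
  (forall x, src (eta x) = c /\ tgt (eta x) = Go (fo L x)) /\
  (forall f : mor R,
     comp (Gm (upE V (fmor L f))) (eta (src f)) =
     comp (Gm (upM V (fmor L f))) (eta (tgt f))).

Definition is_end (A C R : Cat) (V : Variance A) (L : Functor R A)
  (Go : ob A -> ob C) (Gm : mor A -> mor C)
  (c : ob C) (eta : ob R -> mor C) : Prop :=
  is_wedge V L Go Gm c eta /\
  (forall (d : ob C) (theta : ob R -> mor C), is_wedge V L Go Gm d theta ->
     exists! h : mor C, src h = d /\ tgt h = c /\
       (forall x, comp (eta x) h = theta x)).

Definition partial_ob (A B C : Cat) (V : Variance (prodCat A B))
  (F : VFunctor C V) (y : ob B) : ob A -> ob C :=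
  fun x => vo F (x, y).
Definition partial_mor (A B C : Cat) (V : Variance (prodCat A B))
  (F : VFunctor C V) (y : ob B) : mor A -> mor C :=
  fun f => vmor F (f, idm y).

(* Main.v *)
Require Import Defs.
From Stdlib Require Import ClassicalEpsilon.
Set Implicit Arguments.
Unset Strict Implicit.

Section Var.
Variables (A : Cat) (V : Variance A).

Lemma up_spec f : covE V (upE V f) /\ contM V (upM V f) /\
  tgt (upE V f) = src (upM V f) /\ f = comp (upM V f) (upE V f).
Proof.
  unfold upE, upM, fact_up. cbv zeta.
  destruct (constructive_indefinite_description _ (fact_ME_ex V f)) as [e He]. simpl.
  destruct (constructive_indefinite_description _ He) as [m Hm]. simpl. exact Hm.
Qed.

Lemma lo_spec f : contM V (loM V f) /\ covE V (loE V f) /\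
  tgt (loM V f) = src (loE V f) /\ f = comp (loE V f) (loM V f).
Proof.
  unfold loE, loM, fact_lo. cbv zeta.
  destruct (constructive_indefinite_description _ (fact_EM_ex V f)) as [e He]. simpl.
  destruct (constructive_indefinite_description _ He) as [m Hm]. simpl. exact Hm.
Qed.

Lemma up_uniq e m : covE V e -> contM V m -> tgt e = src m ->
  upE V (comp m e) = e /\ upM V (comp m e) = m.
Proof.
  intros He Hm H.
  destruct (up_spec (comp m e)) as (h1&h2&h3&h4).
  destruct (fact_ME_uniq h1 h2 He Hm h3 H (eq_sym h4)); auto.
Qed.

Lemma lo_uniq m e : contM V m -> covE V e -> tgt m = src e ->
  loM V (comp e m) = m /\ loE V (comp e m) = e.
Proof.
  intros Hm He H.
  destruct (lo_spec (comp e m)) as (h1&h2&h3&h4).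
  destruct (fact_EM_uniq h1 h2 Hm He h3 H (eq_sym h4)); auto.
Qed.

Lemma src_upE f : src (upE V f) = src f.
Proof.
  destruct (up_spec f) as (h1&h2&h3&h4).
  pose proof (src_comp h3) as X. rewrite <- h4 in X. auto.
Qed.
Lemma tgt_upM f : tgt (upM V f) = tgt f.
Proof.
  destruct (up_spec f) as (h1&h2&h3&h4).
  pose proof (tgt_comp h3) as X. rewrite <- h4 in X. auto.
Qed.
Lemma src_loM f : src (loM V f) = src f.
Proof.
  destruct (lo_spec f) as (h1&h2&h3&h4).
  pose proof (src_comp h3) as X. rewrite <- h4 in X. auto.
Qed.
Lemma tgt_loE f : tgt (loE V f) = tgt f.
Proof.
  destruct (lo_spec f) as (h1&h2&h3&h4).
  pose proof (tgt_comp h3) as X. rewrite <- h4 in X. auto.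
Qed.
Lemma tgt_upE f : tgt (upE V f) = src (upM V f).
Proof. apply up_spec. Qed.
Lemma tgt_loM f : tgt (loM V f) = src (loE V f).
Proof. apply lo_spec. Qed.

Lemma E_up e : covE V e -> upE V e = e /\ upM V e = idm (tgt e).
Proof.
  intros He. pose proof (@up_uniq e (idm (tgt e)) He (contM_idm V _) (eq_sym (src_idm _))) as X.
  rewrite comp_idl in X. exact X.
Qed.
Lemma E_lo e : covE V e -> loM V e = idm (src e) /\ loE V e = e.
Proof.
  intros He. pose proof (@lo_uniq (idm (src e)) e (contM_idm V _) He (tgt_idm _)) as X.
  rewrite comp_idr in X. exact X.
Qed.
Lemma M_up m : contM V m -> upE V m = idm (src m) /\ upM V m = m.
Proof.
  intros Hm. pose proof (@up_uniq (idm (src m)) m (covE_idm V _) Hm (tgt_idm _)) as X.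
  rewrite comp_idr in X. exact X.
Qed.
Lemma M_lo m : contM V m -> loM V m = m /\ loE V m = idm (tgt m).
Proof.
  intros Hm. pose proof (@lo_uniq m (idm (tgt m)) Hm (covE_idm V _) (eq_sym (src_idm _))) as X.
  rewrite comp_idl in X. exact X.
Qed.

Lemma fS_E e : covE V e -> fS V e = src e.
Proof. intros He. unfold fS. rewrite (proj1 (E_lo He)). apply tgt_idm. Qed.
Lemma fT_E e : covE V e -> fT V e = tgt e.
Proof. intros He. unfold fT. rewrite (proj1 (E_up He)). auto. Qed.
Lemma fS_M m : contM V m -> fS V m = tgt m.
Proof. intros Hm. unfold fS. rewrite (proj1 (M_lo Hm)). auto. Qed.
Lemma fT_M m : contM V m -> fT V m = src m.
Proof. intros Hm. unfold fT. rewrite (proj1 (M_up Hm)). apply tgt_idm. Qed.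

Lemma upE_idm x : upE V (idm x) = idm x.
Proof. apply (E_up (covE_idm V x)). Qed.
Lemma upM_idm x : upM V (idm x) = idm x.
Proof. rewrite (proj2 (E_up (covE_idm V x))). rewrite tgt_idm. auto. Qed.
Lemma loM_idm x : loM V (idm x) = idm x.
Proof. rewrite (proj1 (E_lo (covE_idm V x))). rewrite src_idm. auto. Qed.
Lemma loE_idm x : loE V (idm x) = idm x.
Proof. apply (E_lo (covE_idm V x)). Qed.
Lemma fS_idm x : fS V (idm x) = x.
Proof. rewrite (fS_E (covE_idm V x)). apply src_idm. Qed.
Lemma fT_idm x : fT V (idm x) = x.
Proof. rewrite (fT_E (covE_idm V x)). apply tgt_idm. Qed.


Lemma upE_comp f g : tgt f = src g ->
  upE V (comp g f) = comp (upE V (comp (upE V g) (upM V f))) (upE V f).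
Proof.
  intros Hfg.
  set (k' := comp (upE V g) (upM V f)).
  destruct (up_spec f) as (f1&f2&f3&f4).
  destruct (up_spec g) as (g1&g2&g3&g4).
  destruct (up_spec k') as (k1&k2&k3&k4).
  assert (Hk' : tgt (upM V f) = src (upE V g)) by (rewrite tgt_upM, src_upE; auto).
  assert (srck : src (upE V k') = tgt (upE V f)).
  { rewrite src_upE. unfold k'. rewrite (src_comp Hk'). auto. }
  assert (tgtk : tgt (upM V k') = src (upM V g)).
  { rewrite tgt_upM. unfold k'. rewrite (tgt_comp Hk'). auto. }
  assert (E : comp g f = comp (comp (upM V g) (upM V k')) (comp (upE V k') (upE V f))).
  { set (Ef := upE V f) in *. set (Mf := upM V f) in *. set (Eg := upE V g) in *.
    set (Mg := upM V g) in *. set (k := upE V k') in *. set (mk := upM V k') in *.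
    assert (tMfEf : tgt (comp Mf Ef) = src Eg) by (rewrite (tgt_comp f3); auto).
    rewrite f4 at 1. rewrite g4 at 1.
    rewrite <- (comp_assoc tMfEf g3).
    rewrite (comp_assoc f3 Hk').
    fold k'. rewrite k4 at 1.
    rewrite <- (comp_assoc (eq_sym srck) k3).
    assert (tX : tgt (comp k Ef) = src mk) by (rewrite (tgt_comp (eq_sym srck)); auto).
    rewrite (comp_assoc tX tgtk). auto. }
  rewrite E. apply up_uniq.
  - apply covE_comp; auto.
  - apply contM_comp; auto.
  - rewrite (tgt_comp (eq_sym srck)). rewrite (src_comp tgtk). auto.
Qed.

Lemma loM_comp f g : tgt f = src g ->
  loM V (comp g f) = comp (loM V (comp (loM V g) (loE V f))) (loM V f).
Proof.
  intros Hfg.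
  set (k' := comp (loM V g) (loE V f)).
  destruct (lo_spec f) as (f1&f2&f3&f4).
  destruct (lo_spec g) as (g1&g2&g3&g4).
  destruct (lo_spec k') as (k1&k2&k3&k4).
  assert (Hk' : tgt (loE V f) = src (loM V g)) by (rewrite tgt_loE, src_loM; auto).
  assert (srck : src (loM V k') = tgt (loM V f)).
  { rewrite src_loM. unfold k'. rewrite (src_comp Hk'). auto. }
  assert (tgtk : tgt (loE V k') = src (loE V g)).
  { rewrite tgt_loE. unfold k'. rewrite (tgt_comp Hk'). rewrite tgt_loM; auto. }
  assert (E : comp g f = comp (comp (loE V g) (loE V k')) (comp (loM V k') (loM V f))).
  { set (Ef := loM V f) in *. set (Mf := loE V f) in *. set (Eg := loM V g) in *.
    set (Mg := loE V g) in *. set (k := loM V k') in *. set (mk := loE V k') in *.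
    assert (tMfEf : tgt (comp Mf Ef) = src Eg) by (rewrite (tgt_comp f3); auto).
    rewrite f4 at 1. rewrite g4 at 1.
    rewrite <- (comp_assoc tMfEf g3).
    rewrite (comp_assoc f3 Hk').
    fold k'. rewrite k4 at 1.
    rewrite <- (comp_assoc (eq_sym srck) k3).
    assert (tX : tgt (comp k Ef) = src mk) by (rewrite (tgt_comp (eq_sym srck)); auto).
    rewrite (comp_assoc tX tgtk). auto. }
  rewrite E. apply lo_uniq.
  - apply contM_comp; auto.
  - apply covE_comp; auto.
  - rewrite (tgt_comp (eq_sym srck)). rewrite (src_comp tgtk). auto.
Qed.

Lemma fT_comp f g : tgt f = src g ->
  fT V (comp g f) = tgt (upE V (comp (upE V g) (upM V f))).
Proof.
  intros H. unfold fT at 1. rewrite (upE_comp H). apply tgt_comp.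
  rewrite src_upE. rewrite src_comp. apply tgt_upE. rewrite tgt_upM, src_upE; auto.
Qed.
Lemma fS_comp f g : tgt f = src g ->
  fS V (comp g f) = tgt (loM V (comp (loM V g) (loE V f))).
Proof.
  intros H. unfold fS at 1. rewrite (loM_comp H). apply tgt_comp.
  rewrite src_loM. rewrite src_comp. apply tgt_loM. rewrite tgt_loE, src_loM; auto.
Qed.

Lemma obj_comp1 f g : tgt f = src g ->
  fS V (upE V (comp (upE V g) (upM V f))) = fT V f /\
  fT V (upE V (comp (upE V g) (upM V f))) = fT V (comp g f) /\
  fT V (loM V (comp (loM V g) (loE V f))) = fS V f /\
  fS V (loM V (comp (loM V g) (loE V f))) = fS V (comp g f).
Proof.
  intros H.
  assert (Hk : tgt (upM V f) = src (upE V g)) by (rewrite tgt_upM, src_upE; auto).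
  assert (Hj : tgt (loE V f) = src (loM V g)) by (rewrite tgt_loE, src_loM; auto).
  destruct (up_spec (comp (upE V g) (upM V f))) as (k1&k2&_&_).
  destruct (lo_spec (comp (loM V g) (loE V f))) as (j1&j2&_&_).
  repeat split.
  - rewrite (fS_E k1), src_upE, (src_comp Hk), <- tgt_upE. auto.
  - rewrite (fT_E k1), (fT_comp H). auto.
  - rewrite (fT_M j1), src_loM, (src_comp Hj), <- tgt_loM. auto.
  - rewrite (fS_M j1), (fS_comp H). auto.
Qed.

Lemma obj_comp2 f g : tgt f = src g ->
  fS V (upM V (comp (upE V g) (upM V f))) = fT V g /\
  fT V (upM V (comp (upE V g) (upM V f))) = fT V (comp g f) /\
  fT V (loE V (comp (loM V g) (loE V f))) = fS V g /\
  fS V (loE V (comp (loM V g) (loE V f))) = fS V (comp g f).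
Proof.
  intros H.
  assert (Hk : tgt (upM V f) = src (upE V g)) by (rewrite tgt_upM, src_upE; auto).
  assert (Hj : tgt (loE V f) = src (loM V g)) by (rewrite tgt_loE, src_loM; auto).
  destruct (up_spec (comp (upE V g) (upM V f))) as (k1&k2&_&_).
  destruct (lo_spec (comp (loM V g) (loE V f))) as (j1&j2&_&_).
  repeat split.
  - rewrite (fS_M k2), tgt_upM, (tgt_comp Hk). auto.
  - rewrite (fT_M k2), (fT_comp H), tgt_upE. auto.
  - rewrite (fT_E j2), tgt_loE, (tgt_comp Hj). auto.
  - rewrite (fS_E j2), (fS_comp H), tgt_loM. auto.
Qed.
End Var.

Section Prod.
Variables (A B : Cat) (VA : Variance A) (VB : Variance B) (VAB : Variance (prodCat A B)).
Hypothesis HVAB : is_product_variance VA VB VAB.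

Lemma psrc_eq (p : mor (prodCat A B)) : src p = (src (fst p), src (snd p)).
Proof. reflexivity. Qed.
Lemma ptgt_eq (p : mor (prodCat A B)) : tgt p = (tgt (fst p), tgt (snd p)).
Proof. reflexivity. Qed.
Lemma pcomp_eq (p q : mor (prodCat A B)) : comp q p = (comp (fst q) (fst p), comp (snd q) (snd p)).
Proof. reflexivity. Qed.
Lemma pidm_eq (x : ob (prodCat A B)) : idm x = (idm (fst x), idm (snd x)).
Proof. reflexivity. Qed.

Lemma up_pair f1 f2 : upE VAB (f1,f2) = (upE VA f1, upE VB f2) /\
                      upM VAB (f1,f2) = (upM VA f1, upM VB f2).
Proof.
  destruct (up_spec VA f1) as (a1&a2&a3&a4).
  destruct (up_spec VB f2) as (b1&b2&b3&b4).
  assert (E : ((f1,f2) : mor (prodCat A B)) = comp (c:=prodCat A B) (upM VA f1, upM VB f2) (upE VA f1, upE VB f2)).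
  { rewrite pcomp_eq. simpl. rewrite <- a4, <- b4. auto. }
  rewrite E at 1 2. apply up_uniq.
  - apply (proj1 HVAB). simpl; auto.
  - apply (proj2 HVAB). simpl; auto.
  - rewrite psrc_eq, ptgt_eq. simpl. rewrite a3, b3. auto.
Qed.

Lemma lo_pair f1 f2 : loM VAB (f1,f2) = (loM VA f1, loM VB f2) /\
                      loE VAB (f1,f2) = (loE VA f1, loE VB f2).
Proof.
  destruct (lo_spec VA f1) as (a1&a2&a3&a4).
  destruct (lo_spec VB f2) as (b1&b2&b3&b4).
  assert (E : ((f1,f2) : mor (prodCat A B)) = comp (c:=prodCat A B) (loE VA f1, loE VB f2) (loM VA f1, loM VB f2)).
  { rewrite pcomp_eq. simpl. rewrite <- a4, <- b4. auto. }
  rewrite E at 1 2. apply lo_uniq.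
  - apply (proj2 HVAB). simpl; auto.
  - apply (proj1 HVAB). simpl; auto.
  - rewrite psrc_eq, ptgt_eq. simpl. rewrite a3, b3. auto.
Qed.

Lemma upE_pair f1 f2 : upE VAB (f1,f2) = (upE VA f1, upE VB f2).
Proof. apply up_pair. Qed.
Lemma upM_pair f1 f2 : upM VAB (f1,f2) = (upM VA f1, upM VB f2).
Proof. apply up_pair. Qed.
Lemma loM_pair f1 f2 : loM VAB (f1,f2) = (loM VA f1, loM VB f2).
Proof. apply lo_pair. Qed.
Lemma loE_pair f1 f2 : loE VAB (f1,f2) = (loE VA f1, loE VB f2).
Proof. apply lo_pair. Qed.
Lemma fS_pair f1 f2 : fS VAB (f1,f2) = (fS VA f1, fS VB f2).
Proof. unfold fS. rewrite loM_pair. reflexivity. Qed.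
Lemma fT_pair f1 f2 : fT VAB (f1,f2) = (fT VA f1, fT VB f2).
Proof. unfold fT. rewrite upE_pair. reflexivity. Qed.
End Prod.

Lemma comp_idl' (C : Cat) (f : mor C) x : tgt f = x -> comp (idm x) f = f.
Proof. intros <-; apply comp_idl. Qed.
Lemma comp_idr' (C : Cat) (f : mor C) x : src f = x -> comp f (idm x) = f.
Proof. intros <-; apply comp_idr. Qed.
Lemma comp_idm_idm (C : Cat) (x : ob C) : comp (idm x) (idm x) = idm x.
Proof. apply comp_idl'. apply tgt_idm. Qed.

Section Main.
Variables (A B C R1 : Cat) (VA : Variance A) (VB : Variance B)
  (L1 : Functor R1 A) (VAB : Variance (prodCat A B)).
Hypothesis HVAB : is_product_variance VA VB VAB.
Variable F : VFunctor C VAB.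

Lemma F_idm x y : vmor F (idm x, idm y) = idm (vo F (x, y)).
Proof. exact (vmor_idm F (x, y)). Qed.

Lemma F_src f g : src (vmor F (f, g)) = vo F (fS VA f, fS VB g).
Proof. rewrite vmor_src. rewrite (fS_pair HVAB). auto. Qed.
Lemma F_tgt f g : tgt (vmor F (f, g)) = vo F (fT VA f, fT VB g).
Proof. rewrite vmor_tgt. rewrite (fT_pair HVAB). auto. Qed.

Ltac psimp := repeat (rewrite ?(upE_pair HVAB), ?(upM_pair HVAB), ?(loM_pair HVAB), ?(loE_pair HVAB),
   ?pcomp_eq, ?upE_idm, ?upM_idm, ?loM_idm, ?loE_idm, ?comp_idm_idm, ?comp_idl, ?comp_idr; simpl fst; simpl snd).

Lemma IE1 e g : covE VA e ->
  vmor F (e, g) = comp (vmor F (e, idm (fT VB g))) (vmor F (idm (src e), g)).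
Proof.
  intros He.
  assert (Ht : tgt (c:=prodCat A B) (idm (src e), g) = src (c:=prodCat A B) (e, idm (tgt g))).
  { rewrite ptgt_eq, psrc_eq; simpl. rewrite tgt_idm, src_idm. auto. }
  pose proof (vmor_comp1 F Ht) as X.
  psimp.
  rewrite pcomp_eq in X. simpl fst in X. simpl snd in X. rewrite comp_idr, comp_idl in X.
  rewrite X. clear X.
  psimp.
  rewrite (proj1 (E_up He)), (proj1 (E_lo He)), comp_idr, comp_idm_idm.
  rewrite (comp_idl' (tgt_upM VB g)), (comp_idl' (tgt_loE VB g)).
  destruct (up_spec VB g) as (_&g2&_&_). destruct (lo_spec VB g) as (_&g3&_&_).
  rewrite (proj1 (M_up g2)), (proj1 (E_lo g3)).
  rewrite <- tgt_upE, <- tgt_loM. fold (fT VB g). fold (fS VB g).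
  rewrite (proj1 (E_up He)), loM_idm, F_idm. rewrite comp_idr'. auto.
  rewrite F_src, fS_idm. auto.
Qed.

Lemma IE2 e g : covE VA e ->
  vmor F (e, g) = comp (vmor F (idm (tgt e), g)) (vmor F (e, idm (fS VB g))).
Proof.
  intros He.
  assert (Ht : tgt (c:=prodCat A B) (e, idm (src g)) = src (c:=prodCat A B) (idm (tgt e), g)).
  { rewrite ptgt_eq, psrc_eq; simpl. rewrite tgt_idm, src_idm. auto. }
  pose proof (vmor_comp2 F Ht) as X.
  rewrite pcomp_eq in X. simpl fst in X. simpl snd in X. rewrite comp_idr, comp_idl in X.
  rewrite X. clear X.
  psimp.
  destruct (up_spec VB g) as (g1&_&_&_). destruct (lo_spec VB g) as (_&_&_&_).
  destruct (lo_spec VB g) as (g3&_&_&_).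
  rewrite (proj2 (E_up He)), (proj2 (E_lo He)), comp_idm_idm, upM_idm, comp_idl.
  rewrite (comp_idr' (src_upE VB g)), (comp_idr' (src_loM VB g)).
  rewrite (proj2 (E_up g1)), (proj2 (M_lo g3)).
  fold (fT VB g). rewrite tgt_loM. rewrite <- tgt_loM. fold (fS VB g).
  rewrite (proj2 (E_lo He)), F_idm. apply comp_idl'.
  rewrite tgt_comp. rewrite F_tgt, fT_idm. auto.
  rewrite F_tgt, F_src, (fT_E He), fT_idm, fS_idm. auto.
Qed.

Lemma IM1 m g : contM VA m ->
  vmor F (m, g) = comp (vmor F (m, idm (fT VB g))) (vmor F (idm (tgt m), g)).
Proof.
  intros Hm.
  assert (Ht : tgt (c:=prodCat A B) (m, idm (src g)) = src (c:=prodCat A B) (idm (tgt m), g)).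
  { rewrite ptgt_eq, psrc_eq; simpl. rewrite tgt_idm, src_idm. auto. }
  pose proof (vmor_comp2 F Ht) as X.
  rewrite pcomp_eq in X. simpl fst in X. simpl snd in X. rewrite comp_idr, comp_idl in X.
  rewrite X. clear X.
  psimp.
  destruct (up_spec VB g) as (g1&_&_&_).
  destruct (lo_spec VB g) as (g3&_&_&_).
  rewrite (proj2 (M_up Hm)), (proj2 (M_lo Hm)), comp_idm_idm, loE_idm, comp_idl.
  rewrite (comp_idr' (src_upE VB g)), (comp_idr' (src_loM VB g)).
  rewrite (proj2 (E_up g1)), (proj2 (M_lo g3)).
  fold (fT VB g). rewrite tgt_loM. rewrite <- tgt_loM. fold (fS VB g).
  rewrite (proj2 (M_up Hm)), F_idm. rewrite comp_idr'. auto.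
  rewrite F_src, fS_idm. auto.
Qed.

Lemma IM2 m g : contM VA m ->
  vmor F (m, g) = comp (vmor F (idm (src m), g)) (vmor F (m, idm (fS VB g))).
Proof.
  intros Hm.
  assert (Ht : tgt (c:=prodCat A B) (idm (src m), g) = src (c:=prodCat A B) (m, idm (tgt g))).
  { rewrite ptgt_eq, psrc_eq; simpl. rewrite tgt_idm, src_idm. auto. }
  pose proof (vmor_comp1 F Ht) as X.
  rewrite pcomp_eq in X. simpl fst in X. simpl snd in X. rewrite comp_idr, comp_idl in X.
  rewrite X. clear X.
  psimp.
  destruct (up_spec VB g) as (_&g1&_&_).
  destruct (lo_spec VB g) as (_&g3&_&_).
  rewrite (proj1 (M_up Hm)), (proj1 (M_lo Hm)), comp_idm_idm, upE_idm, comp_idr.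
  rewrite (comp_idl' (tgt_upM VB g)), (comp_idl' (tgt_loE VB g)).
  rewrite (proj1 (M_up g1)), (proj1 (E_lo g3)).
  rewrite <- tgt_upE, <- tgt_loM. fold (fT VB g). fold (fS VB g).
  rewrite (proj1 (M_lo Hm)), F_idm. apply comp_idl'.
  rewrite tgt_comp. rewrite F_tgt, fT_idm. auto.
  rewrite F_tgt, F_src, (fT_M Hm), fT_idm, fS_idm. auto.
Qed.

Variables (endF : ob B -> ob C) (omega : ob B -> ob R1 -> mor C).
Hypothesis Hend : forall y : ob B,
     is_end VA L1 (partial_ob F y) (partial_mor F y) (endF y) (omega y).

Definition Hm a g := vmor F (idm (fo L1 a), g).

Lemma src_om y a : src (omega y a) = endF y.
Proof. apply (proj1 (proj1 (Hend y)) a). Qed.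
Lemma tgt_om y a : tgt (omega y a) = vo F (fo L1 a, y).
Proof. apply (proj1 (proj1 (Hend y)) a). Qed.
Lemma src_Hm a g : src (Hm a g) = vo F (fo L1 a, fS VB g).
Proof. unfold Hm. rewrite F_src, fS_idm. auto. Qed.
Lemma tgt_Hm a g : tgt (Hm a g) = vo F (fo L1 a, fT VB g).
Proof. unfold Hm. rewrite F_tgt, fT_idm. auto. Qed.

Definition spec g h := src h = endF (fS VB g) /\ tgt h = endF (fT VB g) /\
  forall a, comp (Hm a g) (omega (fS VB g) a) = comp (omega (fT VB g) a) h.

Lemma theta_wedge g : is_wedge VA L1 (partial_ob F (fT VB g)) (partial_mor F (fT VB g))
   (endF (fS VB g)) (fun a => comp (Hm a g) (omega (fS VB g) a)).
Proof.
  split.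
  - intro x. split.
    + rewrite src_comp. apply src_om. rewrite tgt_om, src_Hm. auto.
    + rewrite tgt_comp. rewrite tgt_Hm. auto. rewrite tgt_om, src_Hm. auto.
  - intro f. unfold partial_mor, Hm.
    destruct (up_spec VA (fmor L1 f)) as (e1&m1&em&_).
    set (e := upE VA (fmor L1 f)) in *. set (m := upM VA (fmor L1 f)) in *.
    assert (Hs : fo L1 (src f) = src e) by (unfold e; rewrite src_upE, fmor_src; auto).
    assert (Ht : fo L1 (tgt f) = tgt m) by (unfold m; rewrite tgt_upM, fmor_tgt; auto).
    pose proof (proj2 (proj1 (Hend (fS VB g))) f) as Hw. unfold partial_mor in Hw. fold e m in Hw.
    rewrite Hs, Ht.
    rewrite (comp_assoc (f := omega (fS VB g) (src f))).
    2:{ rewrite tgt_om, F_src, fS_idm, Hs. auto. }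
    2:{ rewrite F_tgt, F_src, fT_idm, (fS_E e1), fS_idm. auto. }
    rewrite <- (IE1 g e1), (IE2 g e1).
    rewrite <- (comp_assoc (f := omega (fS VB g) (src f))).
    2:{ rewrite tgt_om, F_src, fS_idm, (fS_E e1), Hs. auto. }
    2:{ rewrite F_tgt, F_src, fT_idm, (fT_E e1), fS_idm. auto. }
    rewrite Hw, em.
    rewrite (comp_assoc (f := omega (fS VB g) (tgt f))).
    2:{ rewrite tgt_om, F_src, fS_idm, (fS_M m1), Ht. auto. }
    2:{ rewrite F_tgt, F_src, fT_idm, (fT_M m1), fS_idm. auto. }
    rewrite <- (IM2 g m1), (IM1 g m1).
    rewrite <- (comp_assoc (f := omega (fS VB g) (tgt f))). auto.
    rewrite tgt_om, F_src, fS_idm, Ht. auto.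
    rewrite F_tgt, F_src, fT_idm, (fS_M m1), fS_idm. auto.
Qed.

Lemma spec_ex g : exists h, spec g h.
Proof.
  destruct (proj2 (Hend (fT VB g)) _ _ (theta_wedge g)) as [h [[P1 [P2 P3]] _]].
  exists h. repeat split; auto.
Qed.

Lemma spec_uniq g h1 h2 : spec g h1 -> spec g h2 -> h1 = h2.
Proof.
  intros (s1&t1&e1) (s2&t2&e2).
  destruct (proj2 (Hend (fT VB g)) _ _ (theta_wedge g)) as [h [_ U]].
  rewrite <- (U h1), <- (U h2); auto.
Qed.

Definition Gm g : mor C := proj1_sig (constructive_indefinite_description _ (spec_ex g)).
Lemma Gm_spec g : spec g (Gm g).
Proof. unfold Gm. destruct (constructive_indefinite_description _ (spec_ex g)). auto. Qed.

Lemma spec_comp g k g1 j hk h1 hj :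
  (forall a, Hm a g = comp (Hm a k) (comp (Hm a g1) (Hm a j))) ->
  fS VB k = fT VB g1 -> fT VB k = fT VB g -> fT VB j = fS VB g1 -> fS VB j = fS VB g ->
  spec k hk -> spec g1 h1 -> spec j hj -> spec g (comp hk (comp h1 hj)).
Proof.
  intros Hg Hk1 Hk2 Hj1 Hj2 (sk&tk&ek) (s1&t1&e1) (sj&tj&ej).
  assert (c1 : tgt hj = src h1) by (rewrite tj, s1, Hj1; auto).
  assert (c2 : tgt (comp h1 hj) = src hk) by (rewrite (tgt_comp c1), t1, sk, Hk1; auto).
  split; [|split].
  - rewrite (src_comp c2), (src_comp c1), sj, Hj2. auto.
  - rewrite (tgt_comp c2), tk, Hk2. auto.
  - intro a. rewrite <- Hk2, <- Hj2.
    rewrite (comp_assoc c2). 2:{ rewrite tk, src_om. auto. }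
    rewrite <- ek.
    rewrite <- (comp_assoc (f:=comp h1 hj) (g:=omega (fS VB k) a) (h:=Hm a k)).
    2:{ rewrite c2, sk, src_om. auto. }
    2:{ rewrite tgt_om, src_Hm. auto. }
    rewrite Hk1.
    rewrite (comp_assoc (h:=omega (fT VB g1) a) c1). 2:{ rewrite t1, src_om. auto. }
    rewrite <- e1.
    rewrite <- (comp_assoc (f:=hj) (g:=omega (fS VB g1) a) (h:=Hm a g1)).
    2:{ rewrite tj, Hj1, src_om. auto. }
    2:{ rewrite tgt_om, src_Hm. auto. }
    rewrite <- Hj1.
    rewrite <- ej.
    rewrite Hg.
    assert (c3 : tgt (omega (fS VB j) a) = src (Hm a j)) by (rewrite tgt_om, src_Hm; auto).
    assert (c4 : tgt (Hm a j) = src (Hm a g1)) by (rewrite tgt_Hm, src_Hm, Hj1; auto).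
    assert (c5 : tgt (Hm a g1) = src (Hm a k)) by (rewrite tgt_Hm, src_Hm, Hk1; auto).
    rewrite (comp_assoc c3 c4).
    rewrite <- (comp_assoc (f:=omega (fS VB j) a) (g:=comp (Hm a g1) (Hm a j)) (h:=Hm a k)); auto.
    rewrite (src_comp c4). auto.
    rewrite (tgt_comp c4). auto.
Qed.

Lemma Hcomp1 a f g : tgt f = src g -> Hm a (comp g f) =
  comp (Hm a (upE VB (comp (upE VB g) (upM VB f))))
       (comp (Hm a f) (Hm a (loM VB (comp (loM VB g) (loE VB f))))).
Proof.
  intros H. unfold Hm.
  assert (E : ((idm (fo L1 a), comp g f) : mor (prodCat A B)) =
     comp (c:=prodCat A B) (idm (fo L1 a), g) (idm (fo L1 a), f))
    by (rewrite pcomp_eq; simpl; rewrite comp_idm_idm; auto).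
  assert (Ht : tgt (c:=prodCat A B) (idm (fo L1 a), f) = src (c:=prodCat A B) (idm (fo L1 a), g))
    by (rewrite ptgt_eq, psrc_eq; simpl; rewrite tgt_idm, src_idm, H; auto).
  rewrite E, (vmor_comp1 F Ht). psimp. auto.
Qed.

Lemma Hcomp2 a f g : tgt f = src g -> Hm a (comp g f) =
  comp (Hm a (upM VB (comp (upE VB g) (upM VB f))))
       (comp (Hm a g) (Hm a (loE VB (comp (loM VB g) (loE VB f))))).
Proof.
  intros H. unfold Hm.
  assert (E : ((idm (fo L1 a), comp g f) : mor (prodCat A B)) =
     comp (c:=prodCat A B) (idm (fo L1 a), g) (idm (fo L1 a), f))
    by (rewrite pcomp_eq; simpl; rewrite comp_idm_idm; auto).
  assert (Ht : tgt (c:=prodCat A B) (idm (fo L1 a), f) = src (c:=prodCat A B) (idm (fo L1 a), g))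
    by (rewrite ptgt_eq, psrc_eq; simpl; rewrite tgt_idm, src_idm, H; auto).
  rewrite E, (vmor_comp2 F Ht). psimp. auto.
Qed.

Definition Gfun : VFunctor C VB.
Proof.
  refine {| vo := endF; vmor := Gm |}.
  - intro f. apply (Gm_spec f).
  - intro f. apply (Gm_spec f).
  - intro x. apply spec_uniq with (idm x). apply Gm_spec.
    split; [|split].
    + rewrite src_idm, fS_idm. auto.
    + rewrite tgt_idm, fT_idm. auto.
    + intro a. rewrite fS_idm, fT_idm. unfold Hm. rewrite F_idm.
      rewrite comp_idl'. rewrite comp_idr'. auto. apply src_om. apply tgt_om.
  - intros f g H. apply spec_uniq with (comp g f). apply Gm_spec.
    destruct (obj_comp1 VB H) as (o1&o2&o3&o4).
    apply (spec_comp (k:=upE VB (comp (upE VB g) (upM VB f))) (g1:=f)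
             (j:=loM VB (comp (loM VB g) (loE VB f)))); auto; try apply Gm_spec. intro a. apply Hcomp1; auto.
  - intros f g H. apply spec_uniq with (comp g f). apply Gm_spec.
    destruct (obj_comp2 VB H) as (o1&o2&o3&o4).
    apply (spec_comp (k:=upM VB (comp (upE VB g) (upM VB f))) (g1:=g)
             (j:=loE VB (comp (loM VB g) (loE VB f)))); auto; try apply Gm_spec. intro a. apply Hcomp2; auto.
Defined.

Lemma Gfun_unique (G' : VFunctor C VB) :
  (forall y, vo G' y = endF y) ->
  (forall (a : ob R1) (g : mor B),
       comp (vmor F (idm (fo L1 a), g)) (omega (fS VB g) a) =
       comp (omega (fT VB g) a) (vmor G' g)) ->
  forall g, vmor G' g = vmor Gfun g.
Proof.
  intros Ho He g. simpl. apply spec_uniq with g; [|apply Gm_spec].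
  split; [|split].
  - rewrite vmor_src. auto.
  - rewrite vmor_tgt. auto.
  - intro a. apply He.
Qed.
End Main.

Theorem mainTheorem5
  (A B C R1 R2 : Cat) (VA : Variance A) (VB : Variance B)
  (L1 : Functor R1 A) (L2 : Functor R2 B)
  (VAB : Variance (prodCat A B))
  (HVAB : is_product_variance VA VB VAB)
  (F : VFunctor C VAB)
  (endF : ob B -> ob C) (omega : ob B -> ob R1 -> mor C)
  (Hend : forall y : ob B,
     is_end VA L1 (partial_ob F y) (partial_mor F y) (endF y) (omega y)) :
  exists G : VFunctor C VB,
    (forall y, vo G y = endF y) /\
    (forall (a : ob R1) (g : mor B),
       comp (vmor F (idm (fo L1 a), g)) (omega (fS VB g) a) =
       comp (omega (fT VB g) a) (vmor G g)) /\
    (forall G' : VFunctor C VB,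
       (forall y, vo G' y = endF y) ->
       (forall (a : ob R1) (g : mor B),
          comp (vmor F (idm (fo L1 a), g)) (omega (fS VB g) a) =
          comp (omega (fT VB g) a) (vmor G' g)) ->
       forall g, vmor G' g = vmor G g).
Proof.
  exists (Gfun (F:=F) HVAB Hend).
  split; [intro; reflexivity|split].
  - intros a g. exact (proj2 (proj2 (Gm_spec HVAB Hend g)) a).
  - intros G' H1 H2 g. apply Gfun_unique; auto.
Qed.
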